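(* Let $T>0$, let $H_C:\mathbb R\to\mathbb C^{N\times N}$ be a continuous family of self-adjoint matrices, let $Q=Q^*\in\mathbb C^{N\times N}$ with $Q\neq0$, and suppose the decoupling condition $\int_0^T U_C(\tau,0)\,Q\,U_C(\tau,0)^*\,d\tau = 0$ holds. Then $$\int_0^T\|H_C(t)\|\,dt \ \ge\ \frac12.$$
   Context: $U_C(t,s)$ is the unitary propagator on $\mathbb C^N$ solving $\partial_tU_C(t,s)=-iH_C(t)U_C(t,s)$, $\partial_sU_C(t,s)=iU_C(t,s)H_C(s)$, $U_C(s,s)=\mathbf 1$; $\|\cdot\|$ is the operator norm on $\mathbb C^N$. *)

(* Defs.v *)
From Stdlib Require Import Reals Lra ClassicalEpsilon.
Open Scope R_scope.

Record C := mkC { Re : R; Im : R }.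

Definition C0 : C := mkC 0 0.
Definition C1 : C := mkC 1 0.
Definition Cadd (a b : C) : C := mkC (Re a + Re b) (Im a + Im b).
Definition Cmul (a b : C) : C :=
  mkC (Re a * Re b - Im a * Im b) (Re a * Im b + Im a * Re b).
Definition Cconj (a : C) : C := mkC (Re a) (- Im a).
Definition Cminus_i : C := mkC 0 (-1).
Definition Cnorm2 (a : C) : R := Re a * Re a + Im a * Im a.

Fixpoint Csum (n : nat) (f : nat -> C) : C :=
  match n with O => C0 | S k => Cadd (Csum k f) (f k) end.
Fixpoint Rsum (n : nat) (f : nat -> R) : R :=
  match n with O => 0 | S k => Rsum k f + f k end.

(* ---------- N x N complex matrices and vectors in C^N ----------
   A matrix is a function of the indices; only entries with indices < N
   are meaningful (all predicates below only look at those). *)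
Definition Mat := nat -> nat -> C.
Definition Vec := nat -> C.

Definition Mmul (N : nat) (A B : Mat) : Mat :=
  fun i j => Csum N (fun k => Cmul (A i k) (B k j)).
Definition Madj (A : Mat) : Mat := fun i j => Cconj (A j i).
Definition Mid : Mat := fun i j => if Nat.eqb i j then C1 else C0.
Definition Mscale (c : C) (A : Mat) : Mat := fun i j => Cmul c (A i j).
Definition Mvec (N : nat) (A : Mat) (v : Vec) : Vec :=
  fun i => Csum N (fun k => Cmul (A i k) (v k)).

Definition selfadj (N : nat) (A : Mat) : Prop :=
  forall i j, (i < N)%nat -> (j < N)%nat -> A i j = Cconj (A j i).
Definition Mzero (N : nat) (A : Mat) : Prop :=
  forall i j, (i < N)%nat -> (j < N)%nat -> A i j = C0.

Definition vnorm (N : nat) (v : Vec) : R := sqrt (Rsum N (fun i => Cnorm2 (v i))).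

(* operator norm ||A|| = sup { |A v| : |v| <= 1 } (the least upper bound,
   chosen by classical choice; it exists since the set is nonempty and bounded) *)
Definition opnorm (N : nat) (A : Mat) : R :=
  epsilon (inhabits 0)
    (fun c => is_lub (fun r => exists v : Vec, vnorm N v <= 1 /\ r = vnorm N (Mvec N A v)) c).

Definition Mcontinuous (N : nat) (H : R -> Mat) : Prop :=
  forall i j, (i < N)%nat -> (j < N)%nat ->
    continuity (fun t => Re (H t i j)) /\ continuity (fun t => Im (H t i j)).

(* U t = U_C(t,0):  d/dt U(t) = -i H(t) U(t),  U(0) = 1 *)
Definition propagator0 (N : nat) (H : R -> Mat) (U : R -> Mat) : Prop :=
  (forall i j, (i < N)%nat -> (j < N)%nat -> U 0 i j = Mid i j) /\
  (forall t i j, (i < N)%nat -> (j < N)%nat ->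
     derivable_pt_lim (fun s => Re (U s i j)) t
       (Re (Mscale Cminus_i (Mmul N (H t) (U t)) i j)) /\
     derivable_pt_lim (fun s => Im (U s i j)) t
       (Im (Mscale Cminus_i (Mmul N (H t) (U t)) i j))).

Definition Mintegral_zero (N : nat) (W : R -> Mat) (a b : R) : Prop :=
  forall i j, (i < N)%nat -> (j < N)%nat ->
    (exists pr : Riemann_integrable (fun t => Re (W t i j)) a b, RiemannInt pr = 0) /\
    (exists pr : Riemann_integrable (fun t => Im (W t i j)) a b, RiemannInt pr = 0).

(* Main.v *)
From Stdlib Require Import Reals Lra Lia ClassicalEpsilon FunctionalExtensionality Classical.
Require Import Defs.
Open Scope R_scope.

Lemma C_ext (a b : C) : Re a = Re b -> Im a = Im b -> a = b.
Proof. destruct a, b; simpl; intros; subst; reflexivity. Qed.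

Ltac Ceq := apply C_ext; simpl; ring.

Lemma Csum_ext n f g : (forall k, (k < n)%nat -> f k = g k) -> Csum n f = Csum n g.
Proof. induction n; simpl; intros; auto. rewrite IHn by (intros; apply H; lia). rewrite H by lia; auto. Qed.

Lemma Csum_add n f g : Csum n (fun k => Cadd (f k) (g k)) = Cadd (Csum n f) (Csum n g).
Proof. induction n; simpl. Ceq. rewrite IHn. Ceq. Qed.

Lemma Csum_mul_l n c f : Cmul c (Csum n f) = Csum n (fun k => Cmul c (f k)).
Proof. induction n; simpl. Ceq. rewrite <- IHn. Ceq. Qed.

Lemma Csum_mul_r n c f : Cmul (Csum n f) c = Csum n (fun k => Cmul (f k) c).
Proof. induction n; simpl. Ceq. rewrite <- IHn. Ceq. Qed.

Lemma Csum_conj n f : Cconj (Csum n f) = Csum n (fun k => Cconj (f k)).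
Proof. induction n; simpl. Ceq. rewrite <- IHn. Ceq. Qed.

Lemma Csum_swap n m (f : nat -> nat -> C) :
  Csum n (fun i => Csum m (fun j => f i j)) = Csum m (fun j => Csum n (fun i => f i j)).
Proof.
  induction n; simpl.
  - induction m; simpl; auto. rewrite <- IHm. Ceq.
  - rewrite IHn. rewrite <- Csum_add. reflexivity.
Qed.

Lemma Csum_zero n f : (forall k, (k < n)%nat -> f k = C0) -> Csum n f = C0.
Proof. induction n; simpl; intros; auto. rewrite IHn by (intros; apply H; lia). rewrite H by lia. Ceq. Qed.

Lemma Re_Csum n f : Re (Csum n f) = Rsum n (fun k => Re (f k)).
Proof. induction n; simpl; auto. rewrite IHn; auto. Qed.
Lemma Im_Csum n f : Im (Csum n f) = Rsum n (fun k => Im (f k)).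
Proof. induction n; simpl; auto. rewrite IHn; auto. Qed.

Lemma Csum_delta_l n k f : (k < n)%nat -> Csum n (fun j => Cmul (Mid j k) (f j)) = f k.
Proof.
  induction n; intros; [lia|]. simpl.
  destruct (Nat.eq_dec k n).
  - subst. rewrite Csum_zero.
    + unfold Mid; rewrite Nat.eqb_refl. Ceq.
    + intros j Hj. unfold Mid. destruct (Nat.eqb_spec j n); [lia|]. Ceq.
  - rewrite IHn by lia. unfold Mid. destruct (Nat.eqb_spec n k); [lia|]. Ceq.
Qed.

Lemma Csum_delta_r n k f : (k < n)%nat -> Csum n (fun j => Cmul (f j) (Mid j k)) = f k.
Proof.
  intros. rewrite <- (Csum_delta_l n k f) by auto. apply Csum_ext; intros. Ceq.
Qed.

Lemma Rsum_ext n f g : (forall k, (k < n)%nat -> f k = g k) -> Rsum n f = Rsum n g.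
Proof. induction n; simpl; intros; auto. rewrite IHn by (intros; apply H; lia). rewrite H by lia; auto. Qed.
Lemma Rsum_add n f g : Rsum n (fun k => f k + g k) = Rsum n f + Rsum n g.
Proof. induction n; simpl. ring. rewrite IHn. ring. Qed.
Lemma Rsum_scal n c f : Rsum n (fun k => c * f k) = c * Rsum n f.
Proof. induction n; simpl. ring. rewrite IHn. ring. Qed.
Lemma Rsum_le n f g : (forall k, (k < n)%nat -> f k <= g k) -> Rsum n f <= Rsum n g.
Proof. induction n; simpl; intros. lra. assert (f n <= g n) by (apply H; lia).
  assert (Rsum n f <= Rsum n g) by (apply IHn; intros; apply H; lia). lra. Qed.
Lemma Rsum_nonneg n f : (forall k, (k < n)%nat -> 0 <= f k) -> 0 <= Rsum n f.
Proof. intros. replace 0 with (Rsum n (fun _ => 0)). apply Rsum_le; auto.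
  clear; induction n; simpl; auto; rewrite IHn; ring. Qed.
Lemma Rsum_abs n f : Rabs (Rsum n f) <= Rsum n (fun k => Rabs (f k)).
Proof. induction n; simpl. rewrite Rabs_R0; lra.
  eapply Rle_trans. apply Rabs_triang. lra. Qed.
Lemma Rsum_swap n m (f : nat -> nat -> R) :
  Rsum n (fun i => Rsum m (fun j => f i j)) = Rsum m (fun j => Rsum n (fun i => f i j)).
Proof.
  induction n; simpl.
  - induction m; simpl; auto. rewrite <- IHm. ring.
  - rewrite IHn. rewrite <- Rsum_add. reflexivity.
Qed.
Lemma Rsum_pos n f k : (forall j, (j < n)%nat -> 0 <= f j) -> (k < n)%nat -> 0 < f k -> 0 < Rsum n f.
Proof.
  induction n; intros; [lia|]. simpl.
  assert (0 <= Rsum n f) by (apply Rsum_nonneg; intros; apply H; lia).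
  destruct (Nat.eq_dec k n). subst; lra.
  assert (0 < Rsum n f) by (apply IHn; auto; try lia; intros; apply H; lia).
  assert (0 <= f n) by (apply H; lia). lra.
Qed.

Lemma Mmul_assoc N A B D : Mmul N (Mmul N A B) D = Mmul N A (Mmul N B D).
Proof.
  extensionality i; extensionality j. unfold Mmul.
  transitivity (Csum N (fun l => Csum N (fun k => Cmul (A i k) (Cmul (B k l) (D l j))))).
  - apply Csum_ext; intros. rewrite Csum_mul_r. apply Csum_ext; intros. Ceq.
  - rewrite Csum_swap. apply Csum_ext; intros. rewrite Csum_mul_l. reflexivity.
Qed.

Lemma Mmul_scale_l N c A B : Mmul N (Mscale c A) B = Mscale c (Mmul N A B).
Proof. extensionality i; extensionality j. unfold Mmul, Mscale. rewrite Csum_mul_l. apply Csum_ext; intros; Ceq. Qed.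

Lemma Mmul_scale_r N c A B : Mmul N A (Mscale c B) = Mscale c (Mmul N A B).
Proof. extensionality i; extensionality j. unfold Mmul, Mscale. rewrite Csum_mul_l. apply Csum_ext; intros; Ceq. Qed.

Lemma Madj_Mmul N A B : Madj (Mmul N A B) = Mmul N (Madj B) (Madj A).
Proof. extensionality i; extensionality j. unfold Mmul, Madj. rewrite Csum_conj. apply Csum_ext; intros; Ceq. Qed.

Lemma Madj_scale c A : Madj (Mscale c A) = Mscale (Cconj c) (Madj A).
Proof. extensionality i; extensionality j. unfold Mscale, Madj. Ceq. Qed.

Lemma Mmul_adjH_r N A H i j : selfadj N H -> (j < N)%nat -> Mmul N A (Madj H) i j = Mmul N A H i j.
Proof. intros HH Hj. unfold Mmul, Madj. apply Csum_ext; intros. rewrite <- HH by auto. reflexivity. Qed.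

Lemma Mmul_adjH_l N A H i j : selfadj N H -> (i < N)%nat -> Mmul N (Madj H) A i j = Mmul N H A i j.
Proof. intros HH Hi. unfold Mmul, Madj. apply Csum_ext; intros. rewrite <- HH by auto. reflexivity. Qed.

Lemma trace_cyc N A B : Csum N (fun i => Mmul N A B i i) = Csum N (fun j => Mmul N B A j j).
Proof. unfold Mmul. rewrite Csum_swap. apply Csum_ext; intros. apply Csum_ext; intros. Ceq. Qed.

Lemma Mid_sym i k : Mid i k = Mid k i.
Proof. unfold Mid. rewrite Nat.eqb_sym. reflexivity. Qed.

Lemma W0 N Q i j : (i < N)%nat -> (j < N)%nat -> Mmul N (Mmul N Mid Q) (Madj Mid) i j = Q i j.
Proof.
  intros. unfold Mmul at 1.
  transitivity (Csum N (fun l => Cmul (Q i l) (Mid l j))).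
  - apply Csum_ext; intros l Hl. unfold Mmul. f_equal.
    + rewrite <- (Csum_delta_l N i (fun k => Q k l)) by auto. apply Csum_ext; intros. rewrite Mid_sym. reflexivity.
    + unfold Madj. rewrite Mid_sym. unfold Mid. destruct (Nat.eqb l j); Ceq.
  - apply Csum_delta_r; auto.
Qed.

Lemma dpl_ext f g x l l' : derivable_pt_lim f x l -> (forall y, f y = g y) -> l = l' -> derivable_pt_lim g x l'.
Proof. intros H E ->. assert (g = f) by (extensionality y; auto). subst; auto. Qed.

Lemma cont_ext f g : continuity f -> (forall y, f y = g y) -> continuity g.
Proof. intros H E. assert (g = f) by (extensionality y; auto). subst; auto. Qed.

Definition Ccont (f : R -> C) := continuity (fun s => Re (f s)) /\ continuity (fun s => Im (f s)).

Definition Cdiff (f f' : R -> C) : Prop :=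
 (forall t, derivable_pt_lim (fun s => Re (f s)) t (Re (f' t)) /\
            derivable_pt_lim (fun s => Im (f s)) t (Im (f' t))) /\ Ccont f'.

Lemma dpl_cont f (l : R -> R) : (forall t, derivable_pt_lim f t (l t)) -> continuity f.
Proof. intros H x. apply derivable_continuous_pt. exists (l x). apply H. Qed.

Lemma Cdiff_cont f f' : Cdiff f f' -> Ccont f.
Proof. intros [H _]. split; eapply dpl_cont; intros t; apply H. Qed.

Lemma Ccont_add f g : Ccont f -> Ccont g -> Ccont (fun s => Cadd (f s) (g s)).
Proof. intros [] []; split; simpl.
  - eapply cont_ext. apply (continuity_plus _ _ H H1). intros; reflexivity.
  - eapply cont_ext. apply (continuity_plus _ _ H0 H2). intros; reflexivity. Qed.

Lemma Ccont_mul f g : Ccont f -> Ccont g -> Ccont (fun s => Cmul (f s) (g s)).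
Proof.
  intros [] []; split; simpl.
  - eapply cont_ext. apply continuity_minus; apply continuity_mult; [exact H|exact H1|exact H0|exact H2]. intros; reflexivity.
  - eapply cont_ext. apply continuity_plus; apply continuity_mult; [exact H|exact H2|exact H0|exact H1]. intros; reflexivity.
Qed.

Lemma Ccont_const c : Ccont (fun _ => c).
Proof. split; apply continuity_const; intros x y; reflexivity. Qed.

Lemma Ccont_conj f : Ccont f -> Ccont (fun s => Cconj (f s)).
Proof. intros [] ; split; simpl; auto. eapply cont_ext. apply continuity_opp; eauto. intros; reflexivity. Qed.

Lemma Ccont_sum n (f : nat -> R -> C) : (forall k, (k < n)%nat -> Ccont (f k)) ->
  Ccont (fun s => Csum n (fun k => f k s)).
Proof.
  induction n; intros H; simpl.
  - apply Ccont_const.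
  - apply Ccont_add; [apply IHn; intros; apply H; lia| apply H; lia].
Qed.

Lemma Cdiff_const c : Cdiff (fun _ => c) (fun _ => C0).
Proof. split; [|apply Ccont_const]. intros t; split; simpl;
  [eapply dpl_ext; [apply (derivable_pt_lim_const (Re c))|intros; reflexivity|reflexivity]
  |eapply dpl_ext; [apply (derivable_pt_lim_const (Im c))|intros; reflexivity|reflexivity]]. Qed.

Lemma Cdiff_add f f' g g' : Cdiff f f' -> Cdiff g g' ->
  Cdiff (fun s => Cadd (f s) (g s)) (fun s => Cadd (f' s) (g' s)).
Proof.
  intros [Hf Cf] [Hg Cg]. split; [|apply Ccont_add; auto].
  intros t; destruct (Hf t), (Hg t); split; simpl.
  - eapply dpl_ext; [apply (derivable_pt_lim_plus _ _ _ _ _ H H1)|intros; reflexivity|reflexivity].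
  - eapply dpl_ext; [apply (derivable_pt_lim_plus _ _ _ _ _ H0 H2)|intros; reflexivity|reflexivity].
Qed.

Lemma Cdiff_mul f f' g g' : Cdiff f f' -> Cdiff g g' ->
  Cdiff (fun s => Cmul (f s) (g s)) (fun s => Cadd (Cmul (f' s) (g s)) (Cmul (f s) (g' s))).
Proof.
  intros Df Dg. pose proof (Cdiff_cont _ _ Df) as Cf0. pose proof (Cdiff_cont _ _ Dg) as Cg0.
  destruct Df as [Hf Cf]; destruct Dg as [Hg Cg]. split.
  - intros t; destruct (Hf t), (Hg t); split; simpl.
    + eapply dpl_ext. apply derivable_pt_lim_minus; apply derivable_pt_lim_mult; [exact H|exact H1|exact H0|exact H2].
      intros; reflexivity. simpl. ring.
    + eapply dpl_ext. apply derivable_pt_lim_plus; apply derivable_pt_lim_mult; [exact H|exact H2|exact H0|exact H1].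
      intros; reflexivity. simpl. ring.
  - apply Ccont_add; apply Ccont_mul; auto.
Qed.

Lemma Cdiff_conj f f' : Cdiff f f' -> Cdiff (fun s => Cconj (f s)) (fun s => Cconj (f' s)).
Proof.
  intros [Hf Cf]. split; [|apply Ccont_conj; auto].
  intros t; destruct (Hf t); split; simpl; auto.
  eapply dpl_ext. apply derivable_pt_lim_opp; eauto. intros; reflexivity. reflexivity.
Qed.

Lemma Cdiff_ext f f' g g' : Cdiff f f' -> (forall s, f s = g s) -> (forall s, f' s = g' s) -> Cdiff g g'.
Proof. intros H E1 E2. assert (f = g) by (extensionality s; auto). assert (f' = g') by (extensionality s; auto). subst; auto. Qed.

Lemma Cdiff_mulc_l c g g' : Cdiff g g' -> Cdiff (fun s => Cmul c (g s)) (fun s => Cmul c (g' s)).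
Proof.
  intros D. eapply Cdiff_ext. apply Cdiff_mul. apply Cdiff_const. apply D.
  intros; reflexivity. intros; simpl. Ceq.
Qed.

Lemma Cdiff_mulc_r c g g' : Cdiff g g' -> Cdiff (fun s => Cmul (g s) c) (fun s => Cmul (g' s) c).
Proof.
  intros D. eapply Cdiff_ext. apply Cdiff_mul. apply D. apply Cdiff_const.
  intros; reflexivity. intros; simpl. Ceq.
Qed.

Lemma Cdiff_sum n (f f' : nat -> R -> C) : (forall k, (k < n)%nat -> Cdiff (f k) (f' k)) ->
  Cdiff (fun s => Csum n (fun k => f k s)) (fun s => Csum n (fun k => f' k s)).
Proof.
  induction n; intros H; simpl.
  - apply Cdiff_const.
  - apply Cdiff_add; [apply IHn; intros; apply H; lia| apply H; lia].
Qed.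

Definition nsq (N : nat) (v : Vec) : R := Rsum N (fun i => Cnorm2 (v i)).

Lemma Cnorm2_nonneg z : 0 <= Cnorm2 z.
Proof. unfold Cnorm2; nra. Qed.

Lemma nsq_nonneg N v : 0 <= nsq N v.
Proof. apply Rsum_nonneg; intros; apply Cnorm2_nonneg. Qed.

Lemma Rsum_le_term n f k : (forall j, (j < n)%nat -> 0 <= f j) -> (k < n)%nat -> f k <= Rsum n f.
Proof.
  induction n; intros; [lia|]. simpl.
  assert (0 <= Rsum n f) by (apply Rsum_nonneg; intros; apply H; lia).
  destruct (Nat.eq_dec k n). subst; lra.
  assert (f k <= Rsum n f) by (apply IHn; auto; try lia; intros; apply H; lia).
  assert (0 <= f n) by (apply H; lia). lra.
Qed.

Lemma absbound a b x y : -1 <= x <= 1 -> -1 <= y <= 1 -> Rabs (a*x - b*y) <= Rabs a + Rabs b.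
Proof. intros. unfold Rabs; repeat destruct Rcase_abs; nra. Qed.
Lemma absbound' a b x y : -1 <= x <= 1 -> -1 <= y <= 1 -> Rabs (a*x + b*y) <= Rabs a + Rabs b.
Proof. intros. unfold Rabs; repeat destruct Rcase_abs; nra. Qed.

Lemma sq_le_of_abs x b : Rabs x <= b -> x * x <= b * b.
Proof. intros. assert (Rabs x * Rabs x = x*x) by (rewrite <- Rabs_mult; apply Rabs_pos_eq; nra).
  pose proof (Rabs_pos x). nra. Qed.

Lemma opnorm_set_bound N A : bound (fun r => exists v : Vec, vnorm N v <= 1 /\ r = vnorm N (Mvec N A v)).
Proof.
  set (b := fun i => Rsum N (fun k => Rabs (Re (A i k)) + Rabs (Im (A i k)))).
  exists (sqrt (Rsum N (fun i => 2 * (b i * b i)))).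
  intros r [v [Hv ->]]. unfold vnorm. apply sqrt_le_1_alt.
  assert (Hn : nsq N v <= 1).
  { unfold vnorm in Hv. pose proof (nsq_nonneg N v). unfold nsq in *.
    destruct (Rle_dec (Rsum N (fun i => Cnorm2 (v i))) 1); auto.
    exfalso. assert (1 < sqrt (Rsum N (fun i => Cnorm2 (v i)))).
    { rewrite <- sqrt_1. apply sqrt_lt_1_alt; lra. } lra. }
  assert (Hk : forall k, (k < N)%nat -> -1 <= Re (v k) <= 1 /\ -1 <= Im (v k) <= 1).
  { intros k Hk. assert (Cnorm2 (v k) <= 1).
    { eapply Rle_trans; [|apply Hn]. unfold nsq. apply (Rsum_le_term N (fun i => Cnorm2 (v i))); auto. intros; apply Cnorm2_nonneg. }
    unfold Cnorm2 in H. split; split; nra. }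
  apply Rsum_le; intros i Hi. unfold Mvec, Cnorm2. rewrite Re_Csum, Im_Csum.
  assert (Rabs (Rsum N (fun k => Re (Cmul (A i k) (v k)))) <= b i).
  { eapply Rle_trans. apply Rsum_abs. apply Rsum_le; intros k Hk'. simpl.
    destruct (Hk k Hk'). apply absbound; auto. }
  assert (Rabs (Rsum N (fun k => Im (Cmul (A i k) (v k)))) <= b i).
  { eapply Rle_trans. apply Rsum_abs. apply Rsum_le; intros k Hk'. simpl.
    destruct (Hk k Hk'). apply absbound'; tauto. }
  apply sq_le_of_abs in H, H0. lra.
Qed.

Lemma opnorm_lub N A : is_lub (fun r => exists v : Vec, vnorm N v <= 1 /\ r = vnorm N (Mvec N A v)) (opnorm N A).
Proof.
  unfold opnorm. apply epsilon_spec.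
  destruct (completeness _ (opnorm_set_bound N A)) as [m Hm].
  - exists (vnorm N (Mvec N A (fun _ => C0))). exists (fun _ => C0). split; auto.
    unfold vnorm. replace (Rsum N (fun i => Cnorm2 (C0))) with 0. rewrite sqrt_0; lra.
    clear; induction N; simpl; auto. rewrite <- IHN. unfold Cnorm2; simpl; ring.
  - exists m; auto.
Qed.

Lemma Cnorm2_scal r z : Cnorm2 (Cmul (mkC r 0) z) = r * r * Cnorm2 z.
Proof. unfold Cnorm2; simpl; ring. Qed.

Lemma opnorm_bound N A y : nsq N (Mvec N A y) <= (opnorm N A) * (opnorm N A) * nsq N y.
Proof.
  set (X := nsq N (Mvec N A y)). set (s := nsq N y). set (op := opnorm N A).
  assert (Hs : 0 <= s) by apply nsq_nonneg. assert (HX : 0 <= X) by apply nsq_nonneg.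
  assert (Key : forall e, 0 < e -> X <= op * op * (s + e) /\ 0 <= op).
  { intros e He. set (r := / sqrt (s + e)).
    assert (Hse : 0 < sqrt (s + e)) by (apply sqrt_lt_R0; lra).
    assert (Hr2 : r * r * (s + e) = 1).
    { unfold r. rewrite <- Rinv_mult. rewrite sqrt_sqrt by lra. field. lra. }
    assert (Hr : 0 < r) by (unfold r; apply Rinv_0_lt_compat; auto).
    set (v := fun k => Cmul (mkC r 0) (y k)).
    assert (Hnv : nsq N v = r * r * s).
    { unfold v, s, nsq. rewrite <- Rsum_scal. apply Rsum_ext; intros; apply Cnorm2_scal. }
    assert (HAv : nsq N (Mvec N A v) = r * r * X).
    { unfold X, nsq. rewrite <- Rsum_scal. apply Rsum_ext; intros.
      rewrite <- Cnorm2_scal. f_equal. unfold Mvec, v. rewrite Csum_mul_l. apply Csum_ext; intros; Ceq. }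
    destruct (opnorm_lub N A) as [Hub _].
    assert (Hle : vnorm N (Mvec N A v) <= op).
    { apply Hub. exists v. split; auto. unfold vnorm. fold (nsq N v). rewrite Hnv.
      rewrite <- sqrt_1. apply sqrt_le_1_alt. nra. }
    unfold vnorm in Hle. fold (nsq N (Mvec N A v)) in Hle. rewrite HAv in Hle.
    assert (0 <= r * r * X) by nra.
    pose proof (sqrt_pos (r*r*X)).
    assert (r * r * X <= op * op).
    { rewrite <- (sqrt_sqrt (r*r*X)) by auto. nra. }
    split; [|lra].
    assert (X = (r * r * X) * (s + e)) by nra. nra. }
  destruct (Key 1 ltac:(lra)) as [_ Hop].
  destruct (Rle_dec X (op * op * s)); auto. exfalso.
  set (e := (X - op * op * s) / (op * op + 1)).
  assert (He : 0 < e) by (unfold e; apply Rdiv_lt_0_compat; nra).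
  destruct (Key e He) as [H _].
  assert (op * op * e < X - op * op * s).
  { unfold e. apply Rmult_lt_reg_r with (op*op+1). nra. field_simplify; nra. }
  nra.
Qed.

Lemma opnorm_nonneg N A : 0 <= opnorm N A.
Proof.
  destruct (opnorm_lub N A) as [Hub _]. eapply Rle_trans; [|apply Hub].
  2:{ exists (fun _ => C0). split; [|reflexivity].
      unfold vnorm. replace (Rsum N (fun i => Cnorm2 (C0))) with 0. rewrite sqrt_0; lra.
      clear; induction N; simpl; auto. rewrite <- IHN. unfold Cnorm2; simpl; ring. }
  apply sqrt_pos.
Qed.

Lemma const_of_zero_deriv f : (forall t, derivable_pt_lim f t 0) -> forall t, f t = f 0.
Proof.
  intros H t. destruct (Rtotal_order t 0) as [Hlt|[Heq|Hgt]].
  - destruct (MVT_cor2 f (fun _ => 0) t 0 Hlt) as [c [Hc _]]; [intros; apply H|]. lra.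
  - subst; auto.
  - destruct (MVT_cor2 f (fun _ => 0) 0 t Hgt) as [c [Hc _]]; [intros; apply H|]. lra.
Qed.

Lemma Cconj_Mid j k : Cconj (Mid j k) = Mid j k.
Proof. unfold Mid; destruct (Nat.eqb j k); Ceq. Qed.

Section Unitarity.
Variables (N : nat) (H : R -> Mat) (U : R -> Mat).
Hypothesis hHcont : Mcontinuous N H.
Hypothesis hHsa : forall t, selfadj N (H t).
Hypothesis hU : propagator0 N H U.

Definition Ud t := Mscale Cminus_i (Mmul N (H t) (U t)).

Lemma U_cont i j : (i < N)%nat -> (j < N)%nat -> Ccont (fun t => U t i j).
Proof.
  intros. destruct hU as [_ hd]. split; eapply dpl_cont; intros t; apply (hd t i j); auto.
Qed.

Lemma U_diff i j : (i < N)%nat -> (j < N)%nat -> Cdiff (fun t => U t i j) (fun t => Ud t i j).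
Proof.
  intros. destruct hU as [_ hd]. split.
  - intros t. apply (hd t i j); auto.
  - unfold Ud, Mscale, Mmul. apply Ccont_mul. apply Ccont_const.
    apply Ccont_sum. intros m Hm. apply Ccont_mul.
    + destruct (hHcont i m) as [A B]; auto. split; auto.
    + apply U_cont; auto.
Qed.

Lemma Madj_Ud t : Madj (Ud t) = Mscale (Cconj Cminus_i) (Mmul N (Madj (U t)) (Madj (H t))).
Proof. unfold Ud. rewrite Madj_scale, Madj_Mmul. reflexivity. Qed.

Lemma unitary t k l : (k < N)%nat -> (l < N)%nat -> Mmul N (Madj (U t)) (U t) k l = Mid k l.
Proof.
  intros Hk Hl.
  set (P := fun t => Csum N (fun j => Cmul (Cconj (U t j k)) (U t j l))).
  set (Pd := fun t => Csum N (fun j => Cadd (Cmul (Cconj (Ud t j k)) (U t j l)) (Cmul (Cconj (U t j k)) (Ud t j l)))).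
  assert (HD : Cdiff P Pd).
  { apply Cdiff_sum. intros j Hj. apply Cdiff_mul. apply Cdiff_conj. apply U_diff; auto. apply U_diff; auto. }
  assert (HZ : forall t, Pd t = C0).
  { intros s. unfold Pd. rewrite Csum_add.
    change (Csum N (fun j => Cmul (Cconj (Ud s j k)) (U s j l))) with (Mmul N (Madj (Ud s)) (U s) k l).
    change (Csum N (fun j => Cmul (Cconj (U s j k)) (Ud s j l))) with (Mmul N (Madj (U s)) (Ud s) k l).
    rewrite Madj_Ud, Mmul_scale_l, Mmul_assoc. unfold Ud. rewrite Mmul_scale_r.
    unfold Mscale.
    assert (E : Mmul N (Madj (U s)) (Mmul N (Madj (H s)) (U s)) k l = Mmul N (Madj (U s)) (Mmul N (H s) (U s)) k l).
    { unfold Mmul at 1 3. apply Csum_ext; intros. f_equal. apply Mmul_adjH_l; auto. }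
    rewrite E. Ceq. }
  destruct HD as [HD _].
  assert (Re (P t) = Re (P 0)).
  { apply (const_of_zero_deriv (fun s => Re (P s))). intros s. destruct (HD s) as [A _]. rewrite HZ in A. exact A. }
  assert (Im (P t) = Im (P 0)).
  { apply (const_of_zero_deriv (fun s => Im (P s))). intros s. destruct (HD s) as [_ A]. rewrite HZ in A. exact A. }
  assert (P t = P 0) by (apply C_ext; auto).
  change (P t = Mid k l). rewrite H2. unfold P.
  destruct hU as [h0 _].
  rewrite <- (Csum_delta_l N k (fun j => Mid j l)) by auto.
  apply Csum_ext; intros. rewrite !h0 by auto. rewrite Cconj_Mid. reflexivity.
Qed.

End Unitarity.

Definition ip (N : nat) (a b : Vec) : C := Csum N (fun i => Cmul (Cconj (a i)) (b i)).

Lemma nsq_ip N v : nsq N v = Re (ip N v v).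
Proof. unfold nsq, ip. rewrite Re_Csum. apply Rsum_ext; intros. unfold Cnorm2; simpl; ring. Qed.

Lemma ip_adj N A x y : ip N (Mvec N A x) y = ip N x (Mvec N (Madj A) y).
Proof.
  unfold ip, Mvec, Madj.
  transitivity (Csum N (fun i => Csum N (fun k => Cmul (Cconj (x k)) (Cmul (Cconj (A i k)) (y i))))).
  - apply Csum_ext; intros. rewrite Csum_conj, Csum_mul_r. apply Csum_ext; intros. Ceq.
  - rewrite Csum_swap. apply Csum_ext; intros. rewrite Csum_mul_l. reflexivity.
Qed.

Lemma Mvec_Mmul N A B x : Mvec N (Mmul N A B) x = Mvec N A (Mvec N B x).
Proof.
  extensionality i. unfold Mvec, Mmul.
  transitivity (Csum N (fun l => Csum N (fun k => Cmul (A i k) (Cmul (B k l) (x l))))).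
  - apply Csum_ext; intros. rewrite Csum_mul_r. apply Csum_ext; intros. Ceq.
  - rewrite Csum_swap. apply Csum_ext; intros. rewrite Csum_mul_l. reflexivity.
Qed.

Lemma Cnorm2_conj z : Cnorm2 (Cconj z) = Cnorm2 z.
Proof. unfold Cnorm2; simpl; ring. Qed.

Definition Fro (N : nat) (A : Mat) : R := Rsum N (fun i => Rsum N (fun j => Cnorm2 (A i j))).

Section Iso.
Variables (N : nat) (H : R -> Mat) (U : R -> Mat).
Hypothesis hHcont : Mcontinuous N H.
Hypothesis hHsa : forall t, selfadj N (H t).
Hypothesis hU : propagator0 N H U.

Lemma isometry t x : nsq N (Mvec N (U t) x) = nsq N x.
Proof.
  rewrite !nsq_ip, ip_adj, <- Mvec_Mmul. f_equal. unfold ip. apply Csum_ext; intros k Hk.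
  f_equal. unfold Mvec.
  transitivity (Csum N (fun l => Cmul (Mid k l) (x l))).
  - apply Csum_ext; intros. rewrite unitary with (H := H); auto.
  - rewrite <- (Csum_delta_l N k x) by auto. apply Csum_ext; intros. rewrite Mid_sym; reflexivity.
Qed.

Lemma Fro_swap A : Fro N A = Rsum N (fun j => Rsum N (fun i => Cnorm2 (A i j))).
Proof. unfold Fro. apply Rsum_swap. Qed.

Lemma Fro_W t Q : selfadj N Q -> Fro N (Mmul N (Mmul N (U t) Q) (Madj (U t))) = Fro N Q.
Proof.
  intros hQ. rewrite Fro_swap. rewrite Mmul_assoc.
  transitivity (Rsum N (fun j => nsq N (fun i => Mmul N Q (Madj (U t)) i j))).
  { apply Rsum_ext; intros j Hj.
    change (nsq N (Mvec N (U t) (fun k => Mmul N Q (Madj (U t)) k j)) = nsq N (fun i => Mmul N Q (Madj (U t)) i j)).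
    apply isometry. }
  unfold nsq. rewrite Rsum_swap.
  transitivity (Rsum N (fun i => nsq N (Mvec N (U t) (fun k => Q k i)))).
  { apply Rsum_ext; intros i Hi. unfold nsq. apply Rsum_ext; intros j Hj.
    rewrite <- Cnorm2_conj. f_equal. unfold Mmul, Mvec, Madj. rewrite Csum_conj. apply Csum_ext; intros.
    rewrite (hQ k i) by auto. Ceq. }
  transitivity (Rsum N (fun i => nsq N (fun k => Q k i))).
  { apply Rsum_ext; intros. apply isometry. }
  unfold nsq. rewrite Rsum_swap. reflexivity.
Qed.

End Iso.

Definition ipp (N : nat) (a b : Vec) : C := Csum N (fun j => Cmul (a j) (b j)).

Lemma amgm l x y : 0 < l -> Rabs (x * y) <= (l * (x*x) + (y*y) / l) / 2.
Proof.
  intros Hl. assert (E : l * (x*x) + (y*y)/l - 2*(x*y) = (l*x - y)*(l*x - y)/l) by (field; lra).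
  assert (E' : l * (x*x) + (y*y)/l + 2*(x*y) = (l*x + y)*(l*x + y)/l) by (field; lra).
  assert (0 <= (l*x - y)*(l*x - y)/l) by (unfold Rdiv; apply Rmult_le_pos; [apply Rle_0_sqr|left; apply Rinv_0_lt_compat; lra]).
  assert (0 <= (l*x + y)*(l*x + y)/l) by (unfold Rdiv; apply Rmult_le_pos; [apply Rle_0_sqr|left; apply Rinv_0_lt_compat; lra]).
  unfold Rabs; destruct Rcase_abs; lra.
Qed.

Lemma ipp_bound N l a b : 0 < l -> Rabs (Im (ipp N a b)) <= (l * nsq N a + nsq N b / l) / 2.
Proof.
  intros Hl. unfold ipp, nsq. rewrite Im_Csum. eapply Rle_trans. apply Rsum_abs.
  replace ((l * Rsum N (fun i => Cnorm2 (a i)) + Rsum N (fun i => Cnorm2 (b i)) / l) / 2)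
    with (Rsum N (fun i => (l * Cnorm2 (a i) + Cnorm2 (b i) / l) / 2)).
  2:{ clear - Hl. induction N; simpl. field; lra. rewrite IHN. field; lra. }
  apply Rsum_le; intros. simpl.
  pose proof (amgm l (Re (a k)) (Im (b k)) Hl). pose proof (amgm l (Im (a k)) (Re (b k)) Hl).
  eapply Rle_trans. apply Rabs_triang. unfold Cnorm2.
  assert ((l * (Re (a k) * Re (a k) + Im (a k) * Im (a k)) + (Re (b k) * Re (b k) + Im (b k) * Im (b k)) / l) / 2
     = (l * (Re (a k) * Re (a k)) + Im (b k) * Im (b k) / l) / 2 + (l * (Im (a k) * Im (a k)) + Re (b k) * Re (b k) / l) / 2)
    by (field; lra). lra.
Qed.

Section Deriv.
Variables (N : nat) (H : R -> Mat) (U : R -> Mat) (Q : Mat).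
Hypothesis hHcont : Mcontinuous N H.
Hypothesis hHsa : forall t, selfadj N (H t).
Hypothesis hQsa : selfadj N Q.
Hypothesis hU : propagator0 N H U.

Definition W t := Mmul N (Mmul N (U t) Q) (Madj (U t)).
Definition phiC t := Csum N (fun i => Csum N (fun j => Cmul (Q i j) (W t j i))).
Definition Wd t j i := Csum N (fun l => Cadd (Cmul (Csum N (fun k => Cmul (Ud N H U t j k) (Q k l))) (Cconj (U t i l)))
   (Cmul (Csum N (fun k => Cmul (U t j k) (Q k l))) (Cconj (Ud N H U t i l)))).
Definition Dphi t := Csum N (fun i => Csum N (fun j => Cmul (Q i j) (Wd t j i))).

Lemma phi_diff : Cdiff phiC Dphi.
Proof.
  unfold phiC, Dphi. apply Cdiff_sum; intros i Hi. apply Cdiff_sum; intros j Hj.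
  apply Cdiff_mulc_l. unfold W, Wd, Mmul, Madj. apply Cdiff_sum; intros l Hl.
  apply Cdiff_mul.
  - apply Cdiff_sum; intros k Hk. apply Cdiff_mulc_r. apply U_diff; auto.
  - apply Cdiff_conj. apply U_diff; auto.
Qed.

Lemma Wd_eq t j i : (i < N)%nat -> Wd t j i =
  Cadd (Cmul Cminus_i (Mmul N (H t) (W t) j i)) (Cmul (Cconj Cminus_i) (Mmul N (W t) (H t) j i)).
Proof.
  intros Hi. unfold Wd. rewrite Csum_add.
  change (Csum N (fun l => Cmul (Csum N (fun k => Cmul (Ud N H U t j k) (Q k l))) (Cconj (U t i l))))
    with (Mmul N (Mmul N (Ud N H U t) Q) (Madj (U t)) j i).
  change (Csum N (fun l => Cmul (Csum N (fun k => Cmul (U t j k) (Q k l))) (Cconj (Ud N H U t i l))))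
    with (Mmul N (Mmul N (U t) Q) (Madj (Ud N H U t)) j i).
  rewrite Madj_Ud, Mmul_scale_r. unfold Ud. rewrite !Mmul_scale_l.
  rewrite <- (Mmul_assoc N (Mmul N (U t) Q) (Madj (U t)) (Madj (H t))).
  rewrite (Mmul_assoc N (H t) (U t) Q), (Mmul_assoc N (H t) (Mmul N (U t) Q) (Madj (U t))).
  unfold Mscale. rewrite Mmul_adjH_r by auto. reflexivity.
Qed.

Lemma Dphi_eq t : Dphi t = Cadd (Cmul Cminus_i (Csum N (fun i => ipp N (fun j => Q i j) (Mvec N (H t) (fun m => W t m i)))))
   (Cmul (Cconj Cminus_i) (Csum N (fun j => ipp N (fun m => W t j m) (Mvec N (H t) (fun i => Q i j))))).
Proof.
  unfold Dphi.
  transitivity (Csum N (fun i => Cadd (Cmul Cminus_i (Csum N (fun j => Cmul (Q i j) (Mmul N (H t) (W t) j i))))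
      (Cmul (Cconj Cminus_i) (Csum N (fun j => Cmul (Q i j) (Mmul N (W t) (H t) j i)))))).
  { apply Csum_ext; intros i Hi. rewrite !Csum_mul_l, <- Csum_add. apply Csum_ext; intros j Hj.
    rewrite Wd_eq by auto. Ceq. }
  rewrite Csum_add, <- !Csum_mul_l. f_equal.
  change (Csum N (fun i => Csum N (fun j => Cmul (Q i j) (Mmul N (W t) (H t) j i))))
    with (Csum N (fun i => Mmul N Q (Mmul N (W t) (H t)) i i)).
  rewrite trace_cyc, Mmul_assoc. f_equal.
Qed.

End Deriv.

Lemma Rsum_half n l c f g : l <> 0 -> Rsum n (fun i => (l * f i + c * g i / l) / 2) = (l * Rsum n f + c * Rsum n g / l) / 2.
Proof. intros. induction n; simpl. field; lra. rewrite IHn. field; lra. Qed.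

Lemma sum_bound N l (Hm : Mat) (a b : nat -> Vec) : 0 < l ->
  Rabs (Im (Csum N (fun i => ipp N (a i) (Mvec N Hm (b i))))) <=
  (l * Rsum N (fun i => nsq N (a i)) + opnorm N Hm * opnorm N Hm * Rsum N (fun i => nsq N (b i)) / l) / 2.
Proof.
  intros Hl. rewrite Im_Csum. eapply Rle_trans. apply Rsum_abs.
  set (h := opnorm N Hm).
  eapply Rle_trans. apply (Rsum_le _ _ (fun i => (l * nsq N (a i) + h * h * nsq N (b i) / l) / 2)).
  - intros i Hi. eapply Rle_trans. apply (ipp_bound N l); auto.
    pose proof (opnorm_bound N Hm (b i)).
    assert (nsq N (Mvec N Hm (b i)) / l <= h * h * nsq N (b i) / l).
    { unfold Rdiv. apply Rmult_le_compat_r; auto. left; apply Rinv_0_lt_compat; auto. }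
    lra.
  - right. apply Rsum_half; lra.
Qed.

Lemma Fro_nonneg N A : 0 <= Fro N A.
Proof. apply Rsum_nonneg; intros; apply Rsum_nonneg; intros; apply Cnorm2_nonneg. Qed.

Section Bound.
Variables (N : nat) (H : R -> Mat) (U : R -> Mat) (Q : Mat).
Hypothesis hHcont : Mcontinuous N H.
Hypothesis hHsa : forall t, selfadj N (H t).
Hypothesis hQsa : selfadj N Q.
Hypothesis hU : propagator0 N H U.

Lemma Dphi_bound t : Rabs (Re (Dphi N H U Q t)) <= 2 * Fro N Q * opnorm N (H t).
Proof.
  set (c := Fro N Q). set (h := opnorm N (H t)).
  assert (Hc : 0 <= c) by apply Fro_nonneg. assert (Hh : 0 <= h) by apply opnorm_nonneg.
  assert (FW : Fro N (W N U Q t) = c) by (unfold W; apply Fro_W with (H := H); auto).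
  assert (Key : forall e, 0 < e -> Rabs (Re (Dphi N H U Q t)) <= 2 * c * (h + e)).
  { intros e He. set (l := h + e). assert (Hl : 0 < l) by (unfold l; lra).
    rewrite Dphi_eq by auto.
    match goal with |- Rabs (Re (Cadd (Cmul _ ?S1) (Cmul _ ?S2))) <= _ =>
      replace (Re (Cadd (Cmul Cminus_i S1) (Cmul (Cconj Cminus_i) S2))) with (Im S1 - Im S2) by (simpl; ring) end.
    pose proof (sum_bound N l (H t) (fun i j => Q i j) (fun i m => W N U Q t m i) Hl) as B1.
    pose proof (sum_bound N l (H t) (fun j m => W N U Q t j m) (fun j i => Q i j) Hl) as B2.
    cbv beta in B1, B2. fold h in B1, B2.
    change (Rsum N (fun i => nsq N (fun j => Q i j))) with (Fro N Q) in B1.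
    change (Rsum N (fun i => nsq N (fun m => W N U Q t m i))) with (Rsum N (fun i => Rsum N (fun m => Cnorm2 (W N U Q t m i)))) in B1.
    rewrite <- (Fro_swap N (W N U Q t)), FW in B1.
    change (Rsum N (fun j => nsq N (fun m => W N U Q t j m))) with (Fro N (W N U Q t)) in B2.
    change (Rsum N (fun j => nsq N (fun i => Q i j))) with (Rsum N (fun j => Rsum N (fun i => Cnorm2 (Q i j)))) in B2.
    rewrite <- (Fro_swap N Q), FW in B2. fold c in B1, B2.
    assert (h * h * c / l <= l * c).
    { apply Rmult_le_reg_r with l; auto. unfold Rdiv. rewrite Rmult_assoc, Rinv_l by lra.
      unfold l. assert (h*h <= (h+e)*(h+e)) by nra. assert (0 <= ((h+e)*(h+e) - h*h) * c) by (apply Rmult_le_pos; lra). nra. }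
    eapply Rle_trans. unfold Rminus. apply Rabs_triang. rewrite Rabs_Ropp. lra. }
  destruct (Rle_dec (Rabs (Re (Dphi N H U Q t))) (2 * c * h)); auto. exfalso.
  set (X := Rabs (Re (Dphi N H U Q t))).
  assert (Hcp : 0 < c).
  { destruct Hc as [Hc|Hc]; auto. exfalso. pose proof (Key 1 ltac:(lra)) as K1. fold X in K1, n.
    rewrite <- Hc in n, K1. lra. }
  set (e := (X - 2*c*h) / (4 * c)).
  assert (He : 0 < e) by (unfold e; apply Rdiv_lt_0_compat; fold X in n; lra).
  pose proof (Key e He). fold X in H0.
  assert (2 * c * e < X - 2 * c * h) by (unfold e; field_simplify; fold X in n; lra).
  lra.
Qed.

End Bound.

Definition Int0 (T : R) (f : R -> R) := exists pr : Riemann_integrable f 0 T, RiemannInt pr = 0.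

Lemma Int0_ext T f g : Int0 T f -> (forall x, f x = g x) -> Int0 T g.
Proof. intros H E. assert (g = f) by (extensionality y; auto). subst; auto. Qed.

Lemma Int0_lin T f g l : Int0 T f -> Int0 T g -> Int0 T (fun x => f x + l * g x).
Proof.
  intros [p1 e1] [p2 e2]. exists (RiemannInt_P10 l p1 p2).
  rewrite (RiemannInt_P13 p1 p2 (RiemannInt_P10 l p1 p2)). rewrite e1, e2. ring.
Qed.

Lemma Int0_zero T : Int0 T (fun _ => 0).
Proof. pose proof (RiemannInt_P15 (RiemannInt_P14 0 T 0)) as E. exists (RiemannInt_P14 0 T 0). rewrite Rmult_0_l in E. exact E. Qed.

Lemma Int0_scal T g l : Int0 T g -> Int0 T (fun x => l * g x).
Proof. intros. eapply Int0_ext. apply Int0_lin with (l := l); [apply Int0_zero|eauto]. intros; simpl; ring. Qed.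

Lemma Int0_Csum T n (f : nat -> R -> C) : (forall k, (k < n)%nat -> Int0 T (fun x => Re (f k x)) /\ Int0 T (fun x => Im (f k x))) ->
  Int0 T (fun x => Re (Csum n (fun k => f k x))) /\ Int0 T (fun x => Im (Csum n (fun k => f k x))).
Proof.
  induction n; intros Hf; simpl.
  - split; apply Int0_zero.
  - destruct IHn as [A B]; [intros; apply Hf; lia|]. destruct (Hf n) as [C1' D1]; [lia|].
    split; [eapply Int0_ext; [apply (Int0_lin _ _ _ 1 A C1')|intros; simpl; ring]
           |eapply Int0_ext; [apply (Int0_lin _ _ _ 1 B D1)|intros; simpl; ring]].
Qed.

Lemma Int0_Cmul T q (f : R -> C) : Int0 T (fun x => Re (f x)) -> Int0 T (fun x => Im (f x)) ->
  Int0 T (fun x => Re (Cmul q (f x))) /\ Int0 T (fun x => Im (Cmul q (f x))).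
Proof.
  intros A B. split.
  - eapply Int0_ext. apply Int0_lin with (l := - Im q). apply Int0_scal with (l := Re q). apply A. apply B.
    intros; simpl; ring.
  - eapply Int0_ext. apply Int0_lin with (l := Im q). apply Int0_scal with (l := Re q). apply B. apply A.
    intros; simpl; ring.
Qed.

Theorem mainTheorem4 (N : nat) (T : R) (H : R -> Mat) (Q : Mat) (U : R -> Mat)
  (hT : 0 < T)
  (hHcont : Mcontinuous N H)
  (hHsa : forall t, selfadj N (H t))
  (hQsa : selfadj N Q)
  (hQ0 : ~ Mzero N Q)
  (hU : propagator0 N H U)
  (hdec : Mintegral_zero N (fun tau => Mmul N (Mmul N (U tau) Q) (Madj (U tau))) 0 T) :
  forall pr : Riemann_integrable (fun t => opnorm N (H t)) 0 T,
    RiemannInt pr >= 1 / 2.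
Proof.
  intros pr.
  set (c := Fro N Q).
  assert (Hc : 0 < c).
  { apply NNPP; intro Hn. apply hQ0. intros i j Hi Hj. apply NNPP; intro Hq.
    apply Hn. unfold c, Fro.
    apply (Rsum_pos N _ i); auto.
    - intros; apply Rsum_nonneg; intros; apply Cnorm2_nonneg.
    - apply (Rsum_pos N _ j); auto. intros; apply Cnorm2_nonneg.
      unfold Cnorm2. destruct (Q i j) as [a b] eqn:E. simpl.
      destruct (Req_dec a 0); destruct (Req_dec b 0); try nra.
      subst. exfalso. apply Hq. reflexivity. }
  assert (Hphi0 : Re (phiC N U Q 0) = c).
  { unfold phiC, c, Fro. rewrite Re_Csum. apply Rsum_ext; intros i Hi. rewrite Re_Csum.
    apply Rsum_ext; intros j Hj.
    assert (E : W N U Q 0 j i = Q j i).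
    { unfold W. destruct hU as [h0 _]. rewrite <- (W0 N Q j i) by auto.
      unfold Mmul. apply Csum_ext; intros l Hl. f_equal.
      - apply Csum_ext; intros. rewrite h0; auto.
      - unfold Madj. rewrite h0; auto. }
    rewrite E, (hQsa j i) by auto. unfold Cnorm2; simpl; ring. }
  assert (Hint : Int0 T (fun t => Re (phiC N U Q t))).
  { unfold phiC. apply Int0_Csum. intros i Hi. apply Int0_Csum. intros j Hj.
    destruct (hdec j i) as [[p1 e1] [p2 e2]]; auto.
    apply Int0_Cmul.
    - exists p1; auto.
    - exists p2; auto. }
  destruct Hint as [prphi Ephi].
  destruct (Rlt_dec (RiemannInt pr) (1/2)) as [HI|HI]; [|lra]. exfalso.
  set (I := RiemannInt pr) in *.
  destruct (phi_diff N H U Q hHcont hU) as [Dd [DcR _]].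
  set (g := fun t => Rabs (Re (Dphi N H U Q t))).
  assert (Cg : forall x, 0 <= x <= T -> continuity_pt g x).
  { intros x _. unfold g. apply (continuity_pt_comp (fun t => Re (Dphi N H U Q t)) Rabs x).
    apply DcR. apply Rcontinuity_abs. }
  assert (hT' : 0 <= T) by lra.
  set (F := primitive hT' (FTC_P1 hT' Cg)).
  assert (HF : forall x, 0 <= x <= T -> derivable_pt_lim F x (g x)).
  { intros. apply RiemannInt_P28; auto. }
  assert (prg : Riemann_integrable g 0 T) by (apply continuity_implies_RiemannInt; auto).
  assert (EF : RiemannInt prg = F T - F 0) by (apply RiemannInt_P20).
  assert (Hg : RiemannInt prg <= 2 * c * I).
  { pose (pr2 := RiemannInt_P10 (2 * c) (RiemannInt_P14 0 T 0) pr).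
    assert (RiemannInt prg <= RiemannInt pr2).
    { apply RiemannInt_P19; [lra|]. intros x _. unfold g, fct_cte.
      pose proof (Dphi_bound N H U Q hHcont hHsa hQsa hU x). fold c in H0. lra. }
    unfold pr2 in H0. rewrite (RiemannInt_P13 (RiemannInt_P14 0 T 0) pr) in H0.
    rewrite RiemannInt_P15 in H0. unfold I. lra. }
  assert (Hlow : forall x, 0 < x < T -> c - 2 * c * I <= Re (phiC N U Q x)).
  { intros x Hx.
    assert (K : Re (phiC N U Q 0) + F 0 <= Re (phiC N U Q x) + F x).
    { destruct (MVT_cor2 (fun s => Re (phiC N U Q s) + F s) (fun s => Re (Dphi N H U Q s) + g s) 0 x) as [z [Hz _]].
      - lra.
      - intros z Hz. apply derivable_pt_lim_plus. apply Dd. apply HF. lra.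
      - assert (0 <= Re (Dphi N H U Q z) + g z) by (unfold g; unfold Rabs; destruct Rcase_abs; lra).
        assert (0 <= (Re (Dphi N H U Q z) + g z) * (x - 0)) by (apply Rmult_le_pos; lra). lra. }
    assert (K2 : F x <= F T).
    { destruct (MVT_cor2 F g x T) as [z [Hz _]].
      - lra.
      - intros z Hz. apply HF. lra.
      - assert (0 <= g z) by (unfold g; apply Rabs_pos).
        assert (0 <= g z * (T - x)) by (apply Rmult_le_pos; lra). lra. }
    lra. }
  assert (Hm : 0 < c - 2 * c * I) by nra.
  assert (RiemannInt (RiemannInt_P14 0 T (c - 2 * c * I)) <= RiemannInt prphi).
  { apply RiemannInt_P19; [lra|]. intros x Hx. unfold fct_cte. apply Hlow; auto. }
  rewrite RiemannInt_P15, Ephi in H0. nra.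
Qed.
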